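(* Let $k\ge1$ and $1\le r\le 4k^2$. Let $\overline{\mathcal{B}}(2k,2k;r)$ be the subset of $\mathcal{B}(2k,2k;r)$ consisting of all boards whose board partition $(\lambda_1,\lambda_2,\lambda_3,\lambda_4)$ satisfies: (i) $\lambda_1\ge\lambda_i$ for all $i>1$; (ii) $\lambda_2\ge\lambda_4$; (iii) if $\lambda_1=\lambda_2$ then $\lambda_3\ge\lambda_4$. Then: (1) $\overline{\mathcal{B}}(2k,2k;r)$ is a disjoint union of sets each consisting of all boards in $\mathcal{B}(2k,2k;r)$ with some fixed board partition; (2) every board of $\mathcal{B}(2k,2k;r)$ is equivalent under $D_4$ to some board of $\overline{\mathcal{B}}(2k,2k;r)$; (3) if two boards of $\overline{\mathcal{B}}(2k,2k;r)$ are equivalent under $D_4$, they have the same board partition.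
   Context: A $2k\times 2k$ grid has cells $(i,j)$, rows $i=1,\dots,2k$ numbered top to bottom and columns $j=1,\dots,2k$ left to right. $\mathcal{B}(2k,2k;r)$ is the set of boards, i.e. subsets of exactly $r$ (''blocked'') cells. The dihedral group $D_4$ of symmetries of the square (rotations by $0,90,180,270$ degrees about the center, reflections across the horizontal midline, vertical midline, main diagonal and anti-diagonal) acts on cells and hence on boards; two boards are equivalent under $D_4$ if some element maps one to the other. The grid is divided into four $k\times k$ quadrants: $Q_1$ = rows $1..k$, columns $1..k$ (top-left); $Q_2$ = rows $1..k$, columns $k+1..2k$ (top-right); $Q_3$ = rows $k+1..2k$, columns $k+1..2k$ (bottom-right); $Q_4$ = rows $k+1..2k$, columns $1..k$ (bottom-left). The board partition of a board is $(\lambda_1,\lambda_2,\lambda_3,\lambda_4)$, where $\lambda_i$ is the number of blocked cells in $Q_i$. *)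

(* Defs.v *)
From mathcomp Require Import all_boot.
Set Implicit Arguments. Unset Strict Implicit. Unset Printing Implicit Defensive.

(* Cells of the 2k x 2k grid, 0-indexed: cell (i,j) here is cell (i+1,j+1) of the paper. *)
Definition cell (k : nat) : finType := ('I_(2 * k) * 'I_(2 * k))%type.

Inductive D4 := Rid | Rot90 | Rot180 | Rot270 | RefH | RefV | RefD | RefA.

Definition cell_act (k : nat) (g : D4) (c : cell k) : cell k :=
  let (i, j) := c in
  match g with
  | Rid => (i, j)
  | Rot90 => (j, rev_ord i)
  | Rot180 => (rev_ord i, rev_ord j)
  | Rot270 => (rev_ord j, i)
  | RefH => (rev_ord i, j)
  | RefV => (i, rev_ord j)
  | RefD => (j, i)
  | RefA => (rev_ord j, rev_ord i)
  end.

(* Boards: sets of blocked cells. *)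
Definition is_board (k r : nat) (B : {set cell k}) : Prop := #|B| = r.

Definition board_act (k : nat) (g : D4) (B : {set cell k}) : {set cell k} :=
  [set cell_act g c | c in B].

Definition D4_equiv (k : nat) (B B' : {set cell k}) : Prop :=
  exists g : D4, board_act g B = B'.

Definition inQ1 k (c : cell k) : bool := (c.1 < k) && (c.2 < k).
Definition inQ2 k (c : cell k) : bool := (c.1 < k) && (k <= c.2).
Definition inQ3 k (c : cell k) : bool := (k <= c.1) && (k <= c.2).
Definition inQ4 k (c : cell k) : bool := (k <= c.1) && (c.2 < k).

Definition board_partition k (B : {set cell k}) : nat * nat * nat * nat :=
  (#|[set c in B | inQ1 c]|, #|[set c in B | inQ2 c]|,
   #|[set c in B | inQ3 c]|, #|[set c in B | inQ4 c]|).

Definition good_partition (p : nat * nat * nat * nat) : Prop :=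
  let: (l1, l2, l3, l4) := p in
  [/\ l2 <= l1, l3 <= l1, l4 <= l1, l4 <= l2 & (l1 = l2 -> l4 <= l3)].

Definition in_Bbar k r (B : {set cell k}) : Prop :=
  is_board r B /\ good_partition (board_partition B).

(* Main.v *)
Require Import Defs.
From mathcomp Require Import all_boot zify.
From Stdlib Require Import Classical.

Definition invg (g : D4) := match g with Rot90 => Rot270 | Rot270 => Rot90 | x => x end.
Lemma cell_actK k g : cancel (@cell_act k g) (cell_act (invg g)).
Proof. by case: g => -[i j] /=; rewrite ?rev_ordK. Qed.
Lemma cell_act_inj k g : injective (@cell_act k g).
Proof. exact: (can_inj (@cell_actK k g)). Qed.

Lemma card_act k g (B : {set cell k}) (P : pred (cell k)) :
  #|[set c in board_act g B | P c]| = #|[set c in B | P (cell_act g c)]|.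
Proof.
rewrite -[RHS](card_imset _ (@cell_act_inj k g)); apply: eq_card => c.
apply/idP/idP.
- rewrite !inE => /andP[/imsetP[d dB ->] Pd]; apply/imsetP; exists d => //; by rewrite inE dB.
- case/imsetP=> d; rewrite inE => /andP[dB Pd] ->; rewrite inE Pd andbT; exact: imset_f.
Qed.

Definition pperm (g : D4) (p : nat * nat * nat * nat) :=
  let: (a, b, c, d) := p in
  match g with
  | Rid => (a,b,c,d) | Rot90 => (d,a,b,c) | Rot180 => (c,d,a,b) | Rot270 => (b,c,d,a)
  | RefH => (d,c,b,a) | RefV => (b,a,d,c) | RefD => (a,d,c,b) | RefA => (c,b,a,d) end.

Ltac qsolve := let c := fresh in apply: eq_card => c; rewrite !inE; case: c => i j;
  rewrite /inQ1 /inQ2 /inQ3 /inQ4 /=; congr (_ && _); have := ltn_ord i; have := ltn_ord j;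
  move=> ? ?;
  apply/idP/idP => /andP[? ?]; apply/andP; split; lia.

Lemma bp_act k g (B : {set cell k}) : board_partition (board_act g B) = pperm g (board_partition B).
Proof.
rewrite /board_partition !card_act; case: g => /=; congr (_,_,_,_); qsolve.
Qed.

Lemma goodE a b c d : good_partition (a,b,c,d) <->
  (b <= a /\ c <= a /\ d <= a /\ d <= b /\ (a = b -> d <= c)).
Proof. by split; [case | case=> ? [? [? [? ?]]]; split]. Qed.

Lemma good_exists p : exists g, good_partition (pperm g p).
Proof.
case: p => [[[a b] c] d].
apply: NNPP => H.
have H' g : ~ good_partition (pperm g (a,b,c,d)) by move=> Hg; apply: H; exists g.
have N a' b' c' d' : ~ good_partition (a',b',c',d') -> ~ (b' <= a' /\ c' <= a' /\ d' <= a' /\ d' <= b' /\ (a' = b' -> d' <= c')).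
  by move=> Hn Hc; apply: Hn; apply/goodE.
have := N _ _ _ _ (H' Rid); have := N _ _ _ _ (H' Rot90); have := N _ _ _ _ (H' Rot180);
have := N _ _ _ _ (H' Rot270); have := N _ _ _ _ (H' RefH); have := N _ _ _ _ (H' RefV);
have := N _ _ _ _ (H' RefD); have := N _ _ _ _ (H' RefA).
lia.
Qed.

Lemma good_unique g p : good_partition p -> good_partition (pperm g p) -> pperm g p = p.
Proof.
case: p => [[[a b] c] d]; case: g => /goodE H1 /goodE H2 /=; congr (_,_,_,_); lia.
Qed.

Theorem theorem4p1 (k r : nat) (hk : 1 <= k) (hr1 : 1 <= r) (hr2 : r <= 4 * k ^ 2) :
  (exists P : nat * nat * nat * nat -> Prop,
     forall B : {set cell k},
       in_Bbar r B <-> (is_board r B /\ P (board_partition B)))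
  /\
  (forall B : {set cell k}, is_board r B ->
     exists B' : {set cell k}, in_Bbar r B' /\ D4_equiv B B')
  /\
  (forall B B' : {set cell k}, in_Bbar r B -> in_Bbar r B' ->
     D4_equiv B B' -> board_partition B = board_partition B').
Proof.
split; first by exists good_partition.
split.
- move=> B HB; have [g Hg] := good_exists (board_partition B).
  exists (board_act g B); split; last by exists g.
  split; last by rewrite bp_act.
  by rewrite /is_board /board_act card_imset //; exact: cell_act_inj.
- move=> B B' [_ H1] [_ H2] [g eB]; subst B'.
  rewrite bp_act in H2 *; by rewrite (good_unique g _ H1 H2).
Qed.
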